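(* Let $K\subset\mathbb{R}^d$ be an OU set about $x_0\in\mathbb{R}^d$ (in the sense of sets in $\mathbb{R}^d$). Then $K$ is Lebesgue measurable, $\bar K$ and $\overline{K^\circ}$ are OU sets about $x_0$, and $\lambda(K^\circ)=\lambda(K)=\lambda(\bar K)$.
   Context: A set $K\subset\mathbb{R}^d$ is OU about $x_0=(x_{10},\dots,x_{d0})$ if for every $x\in K$ the closed rectangle with edges parallel to the axes and opposite vertices $x_0$ and $x$ lies in $K$, i.e. $(\eta_1x_1+(1-\eta_1)x_{10},\dots,\eta_dx_d+(1-\eta_d)x_{d0})\in K$ for all $\eta_i\in[0,1]$. $\lambda$ is Lebesgue measure; $K^\circ$, $\bar K$ denote interior and closure. *)

(* Defs.v *)
(* R^d is modelled as row vectors 'rV[R]_d with the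
   product (matrix) topology; d-dimensional Lebesgue (outer) measure is defined
   below via countable covers by boxes, and Lebesgue measurability is
   Caratheodory measurability w.r.t. this outer measure. *)
From HB Require Import structures.
From mathcomp Require Import all_boot all_order all_algebra.
From mathcomp Require Import all_classical all_reals all_analysis.
Set Implicit Arguments. Unset Strict Implicit. Unset Printing Implicit Defensive.
Import Order.TTheory GRing.Theory Num.Theory.
Import numFieldNormedType.Exports.
Local Open Scope classical_set_scope.
Local Open Scope ring_scope.

Definition box (R : realType) (d : nat) (a b : 'I_d -> R) : set 'rV[R]_d :=
  [set x | forall i : 'I_d, a i <= x ord0 i < b i].

Definition box_vol (R : realType) (d : nat) (a b : 'I_d -> R) : \bar R :=
  (\prod_(i < d) Num.max (b i - a i) 0)%:E.

Definition lebesgue_outer (R : realType) (d : nat) (A : set 'rV[R]_d) : \bar R :=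
  ereal_inf [set s : \bar R | exists a b : nat -> 'I_d -> R,
     A `<=` \bigcup_k box (a k) (b k) /\
     s = (\sum_(k <oo) box_vol (a k) (b k))%E].

Definition lebesgue_measurable (R : realType) (d : nat) (A : set 'rV[R]_d) : Prop :=
  caratheodory_measurable (@lebesgue_outer R d) A.

(* K is OU about x0: for every x in K, the closed axis-parallel rectangle with
   opposite vertices x0 and x lies in K *)
Definition OU (R : realType) (d : nat) (K : set 'rV[R]_d) (x0 : 'rV[R]_d) : Prop :=
  forall x, K x -> forall eta : 'I_d -> R, (forall i, 0 <= eta i <= 1) ->
    K (\row_i (eta i * x ord0 i + (1 - eta i) * x0 ord0 i)).

(* Main.v *)
Require Import Defs.
From HB Require Import structures.
From mathcomp Require Import all_boot all_order all_algebra.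
From mathcomp Require Import all_classical all_reals all_analysis.
Import Order.TTheory GRing.Theory Num.Theory.
Import numFieldNormedType.Exports.
Local Open Scope classical_set_scope.
Local Open Scope ring_scope.

From mathcomp Require Import ring lra.
Set Implicit Arguments. Unset Strict Implicit. Unset Printing Implicit Defensive.

Lemma maxminE (R : realFieldType) (a b c : R) :
  (Num.max (Num.min b c - a) 0 + Num.max (b - Num.max a c) 0 = Num.max (b - a) 0)%R.
Proof.
rewrite !minEle !maxEle; case: (leP b c) => h1; case: (leP a c) => h2.
all: repeat (case: ifPn; rewrite -?ltNge => ?).
all: lra.
Qed.

Section M1.
Variables (R : realType) (d : nat).
Local Notation V := 'rV[R]_d.
Local Notation lo := (@lebesgue_outer R d).
Local Open Scope ereal_scope.

Lemma vol_ge0 (a b : 'I_d -> R) : 0 <= box_vol a b.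
Proof.
rewrite /box_vol lee_fin; apply: prodr_ge0 => i _.
by rewrite le_max lexx orbT.
Qed.

Lemma lo_ge0 (A : set V) : 0 <= lo A.
Proof.
apply: le_ereal_inf_tmp => s [a [b [_ ->]]].
by apply: nneseries_ge0 => k _ _; exact: vol_ge0.
Qed.

Lemma lo_mono (A B : set V) : A `<=` B -> lo A <= lo B.
Proof.
move=> AB; apply: ereal_inf_le_tmp => s [a [b [Bc ->]]].
by exists a, b; split => //; exact: subset_trans Bc.
Qed.


Lemma lo_sigma_subadditive : sigma_subadditive lo.
Proof.
move=> A; have [[i ioo]|] := pselect (exists i, lo (A i) = +oo).
  rewrite (eseries_pinfty _ _ ioo) ?leey// => n _.
  by rewrite -ltNye (lt_le_trans _ (lo_ge0 _)).
rewrite -forallNE => Aoo.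
suff add2e (e : {posnum R}) :
    lo (\bigcup_n A n) <= \sum_(i <oo) lo (A i) + e%:num%:E.
  by apply/lee_addgt0Pr => _/posnumP[].
rewrite (le_trans _ (epsilon_trick _ _ _))//; last first.
  by move=> n; exact: lo_ge0.
pose P n (B : (nat -> 'I_d -> R) * (nat -> 'I_d -> R)) :=
  A n `<=` \bigcup_k box (B.1 k) (B.2 k) /\
  \sum_(k <oo) box_vol (B.1 k) (B.2 k) <= lo (A n) + (e%:num / (2 ^ n.+1)%:R)%:E.
have [G PG] : {G : nat -> (nat -> 'I_d -> R) * (nat -> 'I_d -> R) & forall n, P n (G n)}.
  apply: (@choice _ _ P) => n; rewrite /P /lebesgue_outer.
  set S := (X in ereal_inf X); move infS : (ereal_inf S) => iS.
  case: iS infS => [r Sr|Soo|Soo].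
  - have en1 : (0 < e%:num / (2 ^ n.+1)%:R)%R by [].
    have /(lb_ereal_inf_adherent en1) : ereal_inf S \is a fin_num by rewrite Sr.
    move=> [x [a [b [AnB muBx]]] xS].
    by exists (a, b); split => //; rewrite -muBx -Sr; exact/ltW.
  - by have := Aoo n; rewrite /lebesgue_outer Soo.
  - suff : lbound S 0 by move/le_ereal_inf_tmp; rewrite Soo.
    by move=> /= _ [a [b [_ ->]]]; apply: nneseries_ge0 => k _ _; exact: vol_ge0.
pose vol2 (p : nat * nat) := box_vol ((G p.1).1 p.2) ((G p.1).2 p.2).
have muG_ge0 x : 0 <= vol2 x by exact: vol_ge0.
apply: (@le_trans _ _ (\esum_(i in setT) vol2 i)).
  have /card_esym/ppcard_eqP[f] := card_nat2.
  rewrite /lebesgue_outer; apply: ereal_inf_lbound => /=.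
  exists (fun k => (G (f k).1).1 (f k).2), (fun k => (G (f k).1).2 (f k).2); split.
    move=> t [i _ /(PG i).1 [j _ Bijt]]; exists (f^-1%FUN (i, j)) => //=.
    by rewrite invK ?inE.
  rewrite -(esum_pred_image vol2 _ xpredT) ?[fun=> _]set_true//.
  congr esum; apply/seteqP; split=> [[i j] _|//]; exists (f^-1%FUN (i,j)) => //; by rewrite invK ?inE.
rewrite (_ : esum _ _ = \sum_(i <oo) \sum_(j <oo ) vol2 (i, j)); last first.
  pose J : nat -> set (nat * nat) := fun i => [set (i, j) | j in setT].
  rewrite (_ : setT = \bigcup_k J k); last first.
    by rewrite predeqE => -[a b]; split => // _; exists a => //; exists b.
  rewrite esum_bigcupT /=; last 2 first.
    - apply/trivIsetP => i j _ _ ij.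
      rewrite predeqE => -[n m] /=; split => //= -[] [_] _ [<-{n} _].
      by move=> [m' _] [] /esym/eqP; rewrite (negbTE ij).
    - by move=> /= [n m]; exact: muG_ge0.
  rewrite -(image_id [set: nat]) -fun_true esum_pred_image//; last first.
    by move=> n _; exact: esum_ge0.
  apply: eq_eseriesr => /= j _.
  rewrite -(esum_pred_image vol2 (pair j) predT)//=; last first.
    by move=> ? ? _ _; exact: (@can_inj _ _ _ snd).
  by congr esum; rewrite predeqE => -[a b]; split; move=> [i _ <-]; exists i.
apply: lee_lim.
- apply: is_cvg_nneseries => n *.
  by apply: nneseries_ge0 => m *; exact: (muG_ge0 (n, m)).
- by apply: is_cvg_nneseries => n *; apply: adde_ge0 => //; exact: lo_ge0.
- by near=> n; apply: lee_sum => i _; exact: (PG i).2.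
Unshelve. all: by end_near. Qed.

End M1.

Section M2.
Variables (R : realType) (n : nat).
Local Notation d := n.+1.
Local Notation V := 'rV[R]_d.
Local Notation lo := (@lebesgue_outer R d).
Local Open Scope ereal_scope.

Lemma vol0 : box_vol (fun _ : 'I_d => 0%R : R) (fun _ => 0%R) = 0.
Proof.
rewrite /box_vol big_ord_recl subrr maxxx mul0r //.
Qed.

Lemma lo_box_le (a b : 'I_d -> R) : lo (box a b) <= box_vol a b.
Proof.
apply: ereal_inf_lbound.
exists (fun k => if k is 0%N then a else (fun _ => 0%R)),
       (fun k => if k is 0%N then b else (fun _ => 0%R)); split.
  by move=> x bx; exists 0%N.
rewrite nneseries_recl //=; last by move=> k _; exact: vol_ge0.
rewrite eseries0 ?adde0 // => -[|k]// _ _; exact: vol0.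
Qed.

Lemma lo0 : lo set0 = 0.
Proof.
apply/eqP; rewrite eq_le lo_ge0 andbT.
apply: ereal_inf_lbound; exists (fun _ _ => 0%R), (fun _ _ => 0%R); split => //.
by rewrite eseries0 // => k _ _; exact: vol0.
Qed.

HB.instance Definition _ := isOuterMeasure.Build R V lo lo0 (@lo_ge0 R d)
  (@lo_mono R d) (@lo_sigma_subadditive R d).

Lemma test_om (A B : set V) : lo (A `|` B) <= lo A + lo B.
Proof. exact: outer_measureU2. Qed.



Definition upd (f : 'I_d -> R) (i : 'I_d) (v : R) := fun j => if j == i then v else f j.

Local Open Scope ereal_scope.
Lemma vol_split (a b : 'I_d -> R) i c :
  box_vol a (upd b i (Num.min (b i) c)) + box_vol (upd a i (Num.max (a i) c)) b
  = box_vol a b.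
Proof.
rewrite /box_vol -EFinD; congr EFin.
rewrite (bigD1 i) // [X in (_ + X)%R](bigD1 i) // [X in _ = X](bigD1 i) //= /upd !eqxx.
have e1 : (\prod_(i0 < d | i0 != i)
      Num.max ((if i0 == i then Num.min (b i) c else b i0) - a i0) 0 =
   \prod_(i0 < d | i0 != i) Num.max (b i0 - a i0) 0)%R.
  by apply: eq_bigr => j /negbTE ->.
have e2 : (\prod_(i0 < d | i0 != i)
      Num.max (b i0 - (if i0 == i then Num.max (a i) c else a i0)) 0 =
   \prod_(i0 < d | i0 != i) Num.max (b i0 - a i0) 0)%R.
  by apply: eq_bigr => j /negbTE ->.
by rewrite e1 e2 -mulrDl maxminE.
Qed.

Lemma half_cara i c : lo.-caratheodory [set x : V | (x ord0 i < c)%R].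
Proof.
apply: le_caratheodory_measurable => X.
apply: (@le_ereal_inf_tmp R) => _ [a [b [cov ->]]].
rewrite -(eq_eseriesr (fun k _ => vol_split (a k) (b k) i c)).
rewrite nneseriesD; last 2 first.
- by move=> k _ _; exact: vol_ge0.
- by move=> k _ _; exact: vol_ge0.
apply: leeD; apply: ereal_inf_lbound.
- exists a, (fun k => upd (b k) i (Num.min (b k i) c)); split => //.
  move=> x [/cov [k _ bx] xc]; exists k => // j; rewrite /upd.
  case: eqP => [->|_]; last exact: bx.
  by have /andP[-> xb] := bx i; rewrite lt_min xb xc.
- exists (fun k => upd (a k) i (Num.max (a k i) c)), b; split => //.
  move=> x [/cov [k _ bx] xc]; exists k => // j; rewrite /upd.
  case: eqP => [->|_]; last exact: bx.
  have /andP[ax ->] := bx i; rewrite ge_max ax andbT andTb.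
  by rewrite leNgt; apply/negP => h; apply: xc.
Qed.

Lemma box_cara (a b : 'I_d -> R) : lo.-caratheodory (box a b).
Proof.
have H (s : seq 'I_d) : lo.-caratheodory
    [set x : V | forall i, i \in s -> (a i <= x ord0 i < b i)%R].
  elim: s => [|i s IH].
    have -> : [set x : V | forall i, i \in [::] -> (a i <= x ord0 i < b i)%R] = ~` set0.
      by apply/seteqP; split => x //= _ i.
    exact/caratheodory_measurable_setC/caratheodory_measurable_set0.
  have -> : [set x : V | forall j, j \in i :: s -> (a j <= x ord0 j < b j)%R] =
     (~` [set x : V | (x ord0 i < a i)%R] `&` [set x : V | (x ord0 i < b i)%R]) `&`
     [set x : V | forall j, j \in s -> (a j <= x ord0 j < b j)%R].
    apply/seteqP; split => x /=.
      move=> h; have /andP[h1 h2] := h i (mem_head _ _).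
      split; [split => //; apply/negP; rewrite -leNgt; exact: h1|].
      by move=> j js; apply: h; rewrite in_cons js orbT.
    move=> [[h1 h2] h] j; rewrite in_cons => /orP[/eqP ->|js]; last exact: h.
    by rewrite h2 andbT leNgt; apply/negP.
  apply: caratheodory_measurable_setI; last exact: IH.
  apply: caratheodory_measurable_setI; last exact: half_cara.
  exact/caratheodory_measurable_setC/half_cara.
have -> : box a b = [set x : V | forall i, i \in enum 'I_d -> (a i <= x ord0 i < b i)%R].
  by apply/seteqP; split => x /= h i; [move=> _; exact: h|apply: h; rewrite mem_enum].
exact: H.
Qed.

Lemma null_cara (N : set V) : lo N = 0 -> lo.-caratheodory N.
Proof.
move=> N0; apply: le_caratheodory_measurable => X.
apply: (@le_trans _ _ (0 + lo X)); last by rewrite add0e.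
apply: leeD; last by apply: lo_mono; exact: subIsetl.
by apply: (le_trans (lo_mono (@subIsetr _ X N))); rewrite N0.
Qed.

Lemma open_cara (U : set V) : open U -> lo.-caratheodory U.
Proof.
move=> oU.
pose C := ({ffun 'I_d -> rat} * {ffun 'I_d -> rat})%type.
pose bx (p : C) : set V := box (fun i => ratr (p.1 i)) (fun i => ratr (p.2 i)).
pose B (k : nat) : set V := fun x => exists p : C,
  [/\ unpickle k = Some p, bx p `<=` U & bx p x].
have -> : U = \bigcup_k B k.
  apply/seteqP; split; last by move=> x [k _ [p [_ pU px]]]; exact: pU.
  move=> x Ux; have := oU x Ux; rewrite /interior => /nbhs_ballP [e e0 eU].
  have ha (i : 'I_d) : exists q : rat, ratr q \in `](x ord0 i - e)%R, x ord0 i[.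
    by apply: rat_in_itvoo; rewrite ltrBlDr ltrDl.
  have hb (i : 'I_d) : exists q : rat, ratr q \in `]x ord0 i, (x ord0 i + e)%R[.
    by apply: rat_in_itvoo; rewrite ltrDl.
  pose p : C := ([ffun i => xchoose (ha i)], [ffun i => xchoose (hb i)]).
  exists (pickle p) => //; exists p; split; first by rewrite pickleK.
  - move=> y py; apply: eU; split => // i j; rewrite (ord1 i) /ball /=.
    have /andP[py1 py2] := py j.
    have := xchooseP (ha j); have := xchooseP (hb j).
    rewrite !in_itv /= !ffunE /= in py1 py2 * => /andP[h1 h2] /andP[h3 h4].
    rewrite ltr_norml; apply/andP; split; lra.
  - move=> j; have := xchooseP (ha j); have := xchooseP (hb j).
    rewrite !in_itv /= !ffunE /= => /andP[h1 h2] /andP[h3 h4].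
    by rewrite (ltW h4) h1.
apply: caratheodory_measurable_bigcup => k.
case Ek: (unpickle k) => [p|]; last first.
  have -> : B k = set0 by apply/seteqP; split => x // [p []]; rewrite Ek.
  exact: caratheodory_measurable_set0.
have [pU|pU] := pselect (bx p `<=` U).
  have -> : B k = bx p.
    apply/seteqP; split => x; first by move=> [q []]; rewrite Ek => -[<-].
    by move=> px; exists p; split.
  exact: box_cara.
have -> : B k = set0.
  by apply/seteqP; split => x // [q []]; rewrite Ek => -[<-].
exact: caratheodory_measurable_set0.
Qed.

End M2.

Section M3.
Variables (R : realType) (n : nat).
Local Notation d := n.+1.
Local Notation V := 'rV[R]_d.
Local Notation lo := (@lebesgue_outer R d).

Definition scl (x0 : V) (s : R) (x : V) : V := \row_i (x0 ord0 i + s * (x ord0 i - x0 ord0 i)).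

Lemma lo_scale (x0 : V) (s : R) (A : set V) : 0 < s ->
  (lo (scl x0 s @` A) <= (s ^+ d)%:E * lo A)%E.
Proof.
move=> s0; rewrite /lebesgue_outer -ereal_inf_pZl ?exprn_gt0 //.
apply: le_ereal_inf_tmp => _ [t [a [b [cov ->]]] <-].
apply: ereal_inf_lbound.
exists (fun k i => x0 ord0 i + s * (a k i - x0 ord0 i)),
       (fun k i => x0 ord0 i + s * (b k i - x0 ord0 i)); split.
  move=> _ [x Ax <-]; have [k _ bx] := cov x Ax; exists k => // i; rewrite mxE.
  have /andP[h1 h2] := bx i.
  by rewrite lerD2l ltrD2l ler_pM2l // ltr_pM2l // lerD2r ltrD2r h1 h2.
rewrite -nneseriesZl; last by move=> k _; exact: vol_ge0.
apply: eq_eseriesr => k _; rewrite /box_vol -EFinM; congr EFin.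
rewrite [RHS](eq_bigr (fun i => s * Num.max (b k i - a k i) 0)).
  by rewrite big_split /= prodr_const card_ord.
move=> i _; rewrite maxr_pMr ?ltW // mulr0; congr (Num.max _ 0); ring.
Qed.

Definition cube (m : nat) : set V := box (fun _ => - m%:R) (fun _ => m%:R).

Lemma cube_cover (x : V) : exists m, cube m x.
Proof.
pose B := \sum_j `|x ord0 j|.
exists (Num.trunc B).+1 => j.
have hB : `|x ord0 j| <= B.
  rewrite /B (bigD1 j) //= lerDl; apply: sumr_ge0 => *; exact: normr_ge0.
have := truncnS_gt B => hm.
have := ler_norm (x ord0 j); have := normrN (x ord0 j); have := ler_norm (- x ord0 j) => h0 h1 h2.
apply/andP; split; lra.
Qed.

Lemma null_union (A : nat -> set V) : (forall m, lo (A m) = 0) -> lo (\bigcup_m A m) = 0.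
Proof.
move=> A0; apply/eqP; rewrite eq_le lo_ge0 andbT.
apply: le_trans (lo_sigma_subadditive A) _.
by rewrite eseries0 // => m _ _; rewrite A0.
Qed.

Lemma hyper_null i c : lo [set x : V | x ord0 i = c] = 0.
Proof.
apply/eqP; rewrite eq_le lo_ge0 andbT.
have -> : [set x : V | x ord0 i = c] = \bigcup_m ([set x : V | x ord0 i = c] `&` cube m).
  apply/seteqP; split => x; last by move=> [m _ []].
  by move=> xc; have [m xm] := cube_cover x; exists m.
rewrite null_union // => m.
apply/eqP; rewrite eq_le lo_ge0 andbT; apply/lee_addgt0Pr => e e0; rewrite add0e.
pose M := \prod_(j < d | j != i) Num.max (m%:R - - m%:R) (0 : R).
have M0 : 0 <= M by apply: prodr_ge0 => j _; rewrite le_max lexx orbT.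
pose eps := e / (M + 1).
have eps0 : 0 < eps by apply: divr_gt0 => //; lra.
pose lo' := fun j => if j == i then c else - m%:R.
pose hi' := fun j => if j == i then c + eps else m%:R.
apply: (@le_trans _ _ (lo (box lo' hi'))).
  apply: lo_mono => x [xc xm] j; rewrite /lo' /hi'; case: eqP => [->|_]; last exact: xm.
  by rewrite xc lexx /= ltrDl.
apply: le_trans (lo_box_le _ _) _.
rewrite /box_vol lee_fin (bigD1 i) //= /lo' /hi' eqxx.
have -> : \prod_(j < d | j != i) Num.max
     ((if j == i then c + eps else m%:R) - (if j == i then c else - m%:R)) 0 = M.
  by apply: eq_bigr => j /negbTE ->.
have -> : c + eps - c = eps by ring.
rewrite max_l ?ltW // /eps mulrAC.
have h : M / (M + 1) < 1 by rewrite ltr_pdivrMr ?mul1r; lra.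
rewrite -mulrA; nra.
Qed.

End M3.

Lemma rect_close (R : realFieldType) (a b c eta e : R) : 0 <= eta <= 1 -> `|a - b| < e ->
  `|(eta * a + (1 - eta) * c) - (eta * b + (1 - eta) * c)| < e.
Proof.
move=> /andP[h0 h1] hab.
have -> : eta * a + (1 - eta) * c - (eta * b + (1 - eta) * c) = eta * (a - b) by ring.
rewrite normrM ger0_norm //; apply: le_lt_trans hab.
by rewrite ler_piMl.
Qed.

Lemma aux2 (R : realFieldType) (q p x eta t e : R) : 0 <= eta <= 1 -> 0 <= t ->
  t * `|q - x| <= e / 2 -> `|q - p| < e / 2 ->
  `|(eta + (1 - eta) * t) * q + (1 - (eta + (1 - eta) * t)) * x - (eta * p + (1 - eta) * x)| < e.
Proof.
move=> /andP[h0 h1] t0 h2 h3.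
have -> : (eta + (1 - eta) * t) * q + (1 - (eta + (1 - eta) * t)) * x - (eta * p + (1 - eta) * x)
   = (1 - eta) * (t * (q - x)) + eta * (q - p) by ring.
apply: le_lt_trans (ler_normD _ _) _.
rewrite !normrM (ger0_norm t0) (ger0_norm h0) ger0_norm ?subr_ge0 //.
have := normr_ge0 (q - p); have := normr_ge0 (q - x) => g1 g2.
nra.
Qed.

Lemma aux3 (R : realFieldType) (a u v r : R) : a != 0 -> 1 / 2 <= r < 1 ->
  `|v - a| < `|a| * (1 - r) / 2 -> `|u - a * r| < `|a| * (1 - r) / 2 ->
  v != 0 /\ 0 <= u / v <= 1.
Proof.
move=> a0 /andP[r1 r2]; rewrite !ltr_norml => /andP[h1 h2] /andP[h3 h4].
have [ap|an] := ltP 0 a.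
  rewrite gtr0_norm // in h1 h2 h3 h4.
  have v0 : 0 < v by nra.
  have uv : u < v by nra.
  have u0 : 0 < u by nra.
  split; first by rewrite gt_eqF.
  apply/andP; split; first by apply: divr_ge0; exact: ltW.
  by rewrite ler_pdivrMr // mul1r; exact: ltW.
have an' : a < 0 by rewrite lt_neqAle a0 an.
rewrite ltr0_norm // in h1 h2 h3 h4.
have v0 : v < 0 by nra.
have uv : v < u by nra.
have u0 : u < 0 by nra.
split; first by rewrite lt_eqF.
rewrite -mulrNN -invrN.
have v0' : 0 < - v by rewrite oppr_gt0.
apply/andP; split; first by apply: divr_ge0; rewrite oppr_ge0 ltW.
by rewrite ler_pdivrMr // mul1r lerN2 ltW.
Qed.

Lemma aux4 (R : realFieldType) (q x z eta r : R) : 0 < eta ->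
  `|z - (eta * q + (1 - eta) * x)| < r * eta -> `|q - (x + (z - x) / eta)| < r.
Proof.
move=> e0 h.
have -> : q - (x + (z - x) / eta) = - (z - (eta * q + (1 - eta) * x)) / eta.
  by field; rewrite gt_eqF.
have ei : 0 < eta^-1 by rewrite invr_gt0.
by rewrite mulNr normrN normrM (gtr0_norm ei) ltr_pdivrMr.
Qed.

Lemma aux5 (R : realFieldType) (A c t : R) : 0 <= A -> 0 < c -> 0 <= t ->
  t <= c / (A + 1) -> t * A <= c.
Proof.
move=> A0 c0 t0 h.
have w1 : c / (A + 1) * (A + 1) = c by field; lra.
have := divr_ge0 (ltW c0) (ltW (_ : 0 < A + 1)) => w2.
nra.
Qed.

Section Top.
Variables (R : realType) (d : nat).
Local Notation V := 'rV[R]_d.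

Definition rect (x0 : V) (eta : 'I_d -> R) (x : V) : V :=
  \row_i (eta i * x ord0 i + (1 - eta i) * x0 ord0 i).

Lemma near_coord (y : V) i (r : R) : 0 < r ->
  \forall z \near y, `|(z : V) ord0 i - y ord0 i| < r.
Proof.
move=> r0; apply/nbhs_ballP; exists r => // z [_ /(_ ord0 i)].
by rewrite /ball /= distrC.
Qed.

Lemma near_all (y : V) (r : 'I_d -> R) : (forall i, 0 < r i) ->
  \forall z \near y, forall i, `|(z : V) ord0 i - y ord0 i| < r i.
Proof.
move=> r0; apply: (@filter_forall _ _ (fun i (z : V) => `|z ord0 i - y ord0 i| < r i) (nbhs y)) => i.
exact: near_coord.
Qed.

Lemma OU_closure (K : set V) x0 : OU K x0 -> OU (closure K) x0.
Proof.
move=> OUK p clp eta heta B /nbhs_ballP [e e0 eB].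
have [q [Kq [_ pq]]] := clp (ball p e) (nbhsx_ballx p e e0).
exists (rect x0 eta q); split; first exact: OUK.
apply: eB; split => // i j; rewrite (ord1 i) /ball /= !mxE.
apply: rect_close => //; have := pq ord0 j; by rewrite /ball.
Qed.

Lemma int_rect (K : set V) x0 q eta : OU K x0 -> interior K q ->
  (forall i, 0 < eta i <= 1) -> interior K (rect x0 eta q).
Proof.
move=> OUK /nbhs_ballP [r r0 rK] heta.
have hp : forall i, 0 < r * eta i.
  by move=> i; apply: mulr_gt0 => //; case/andP: (heta i).
apply: filterS (near_all (rect x0 eta q) hp) => z hz.
pose w : V := \row_i (x0 ord0 i + (z ord0 i - x0 ord0 i) / eta i).
have Kw : K w.
  apply: rK; split => // i j; rewrite (ord1 i) /ball /= !mxE.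
  apply: aux4; first by case/andP: (heta j).
  by have := hz j; rewrite mxE.
have -> : z = rect x0 eta w.
  apply/rowP => j; rewrite !mxE; field.
  by case/andP: (heta j) => h _; rewrite gt_eqF.
apply: (OUK w Kw eta) => i; case/andP: (heta i) => h1 ->; by rewrite ltW.
Qed.

Lemma OU_closure_interior (K : set V) x0 : OU K x0 -> OU (closure (interior K)) x0.
Proof.
move=> OUK p clp eta heta B /nbhs_ballP [e e0 eB].
have e20 : 0 < e / 2 by apply: divr_gt0.
have [q [iq [_ pq]]] := clp (ball p (e / 2)) (nbhsx_ballx p _ e20).
pose t i := Num.min 1 ((e / 2) / (`|q ord0 i - x0 ord0 i| + 1)).
have ht : forall i, 0 < t i <= 1.
  move=> i; rewrite /t lt_min ltr01 ge_min lexx /=.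
  rewrite andbT; apply: divr_gt0 => //; have := normr_ge0 (q ord0 i - x0 ord0 i); lra.
pose eta' i := eta i + (1 - eta i) * t i.
have heta' : forall i, 0 < eta' i <= 1.
  move=> i; rewrite /eta'; case/andP: (heta i) => h1 h2; case/andP: (ht i) => h3 h4.
  apply/andP; split; nra.
exists (rect x0 eta' q); split; first exact: int_rect.
apply: eB; split => // i j; rewrite (ord1 i) /ball /= !mxE distrC.
apply: aux2 => //.
- by case/andP: (ht j) => h _; rewrite ltW.
- apply: aux5; [exact: normr_ge0|done| |by rewrite /t ge_min lexx orbT].
  by case/andP: (ht j) => h _; rewrite ltW.
- by have := pq ord0 j; rewrite /ball /= distrC.
Qed.

Lemma int_shrink (K : set V) x0 p s : OU K x0 -> closure K p ->
  (forall i, p ord0 i != x0 ord0 i) -> 1 < s <= 2 ->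
  interior K (\row_i (x0 ord0 i + (p ord0 i - x0 ord0 i) / s)).
Proof.
move=> OUK clp px /andP[s1 s2].
set q := \row_i _.
pose r := s^-1.
have s0 : 0 < s by lra.
have hr : 1 / 2 <= r < 1.
  have h1 : s * r = 1 by rewrite /r mulfV // gt_eqF.
  have h2 : 0 < r by rewrite /r invr_gt0.
  apply/andP; split; nra.
pose del i := `|p ord0 i - x0 ord0 i| * (1 - r) / 2.
have del0 : forall i, 0 < del i.
  move=> i; rewrite /del; apply: divr_gt0 => //; apply: mulr_gt0.
    by rewrite normr_gt0 subr_eq0.
  by case/andP: hr => _ h; lra.
have [y [Ky hy]] := clp _ (near_all p del0).
rewrite /interior; apply: filterS (near_all q del0) => z hz.
have H : forall i, (y ord0 i - x0 ord0 i != 0) /\ 0 <= (z ord0 i - x0 ord0 i) / (y ord0 i - x0 ord0 i) <= 1.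
  move=> i; apply: (@aux3 _ (p ord0 i - x0 ord0 i) (z ord0 i - x0 ord0 i) (y ord0 i - x0 ord0 i) r) => //.
  - by rewrite subr_eq0.
  - have -> : y ord0 i - x0 ord0 i - (p ord0 i - x0 ord0 i) = y ord0 i - p ord0 i by ring.
    exact: hy.
  - have := hz i; rewrite /q mxE.
    have -> : z ord0 i - (x0 ord0 i + (p ord0 i - x0 ord0 i) / s) =
      z ord0 i - x0 ord0 i - (p ord0 i - x0 ord0 i) * r by rewrite /r; ring.
    done.
pose eta i := (z ord0 i - x0 ord0 i) / (y ord0 i - x0 ord0 i).
have -> : z = rect x0 eta y.
  apply/rowP => j; rewrite !mxE /eta; field.
  by case: (H j).
by apply: (OUK y Ky eta) => i; case: (H i).
Qed.

End Top.

Lemma bern3 (R : realFieldType) (t : R) m : 0 <= t <= 1 -> (1 + t) ^+ m <= 1 + t * 3 ^+ m.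
Proof.
move=> /andP[t0 t1]; elim: m => [|m IH]; first by rewrite !expr0 mulr1 lerDl.
have h3 : 1 <= 3 ^+ m :> R by rewrite exprn_ege1 // ler1n.
rewrite exprSr exprS.
set z := (1 + t) ^+ m in IH *; set y := 3 ^+ m in IH h3 *.
have a1 : z * (1 + t) <= (1 + t * y) * (1 + t) by rewrite ler_wpM2r //; lra.
have ty : 0 <= t * y by apply: mulr_ge0 => //; lra.
have a2 : t * (t * y) <= t * y by rewrite ler_piMl.
have a3 : t <= t * y by rewrite ler_peMr.
have e1 : (1 + t * y) * (1 + t) = 1 + t + t * y + t * (t * y) by ring.
have e2 : t * (3 * y) = 3 * (t * y) by ring.
rewrite e2; rewrite e1 in a1; lra.
Qed.

Section Main.
Variables (R : realType) (n : nat).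
Local Notation d := n.+1.
Local Notation V := 'rV[R]_d.
Local Notation lo := (@lebesgue_outer R d).
Local Open Scope ereal_scope.

Lemma Z_null (x0 : V) : lo [set x : V | exists i, x ord0 i = x0 ord0 i] = 0.
Proof.
apply/eqP; rewrite eq_le lo_ge0 andbT.
rewrite -(null_union (A := fun k => [set x : V | x ord0 (inord k) = x0 ord0 (inord k)])).
  apply: lo_mono => x [i xi]; exists (i : nat) => //=; by rewrite inord_val.
by move=> k; exact: hyper_null.
Qed.

Lemma cl_le_int_s (L : set V) x0 (s : R) : OU L x0 -> (1 < s <= 2)%R ->
  lo (closure L) <= (s ^+ d)%:E * lo (interior L).
Proof.
move=> OUL hs.
have s0 : (0 < s)%R by case/andP: hs => h _; lra.
apply: (@le_trans _ _ (lo (scl x0 s @` interior L `|` [set x : V | exists i, x ord0 i = x0 ord0 i]))).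
  apply: lo_mono => p clp.
  have [h|h] := pselect (forall i, p ord0 i != x0 ord0 i).
    left; exists (\row_i (x0 ord0 i + (p ord0 i - x0 ord0 i) / s))%R.
      exact: int_shrink.
    apply/rowP => j; rewrite !mxE; field; by rewrite gt_eqF.
  right; move/existsNP: h => [i /negP/negbNE/eqP h]; by exists i.
apply: (le_trans (test_om _ _)).
rewrite Z_null adde0; exact: lo_scale.
Qed.

Lemma cl_le_int (L : set V) x0 : OU L x0 -> lo (closure L) <= lo (interior L).
Proof.
move=> OUL.
have := lo_ge0 (interior L).
case E : (lo (interior L)) => [c| |] // c0; last by rewrite leey.
apply/lee_addgt0Pr => e e0.
pose t := (Num.min 1 (e / (c * 3 ^+ d + 1)))%R.
have t0 : (0 < t)%R.
  rewrite /t lt_min ltr01 /=; apply: divr_gt0 => //.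
  have : (0 <= c * 3 ^+ d)%R by apply: mulr_ge0; [rewrite -lee_fin | rewrite exprn_ge0].
  lra.
have t1 : (t <= 1)%R by rewrite /t ge_min lexx.
apply: (le_trans (cl_le_int_s (s := (1 + t)%R) OUL _)).
  by apply/andP; split; lra.
rewrite E -EFinM -EFinD lee_fin.
have hb := bern3 d (_ : (0 <= t <= 1)%R).
have c0' : (0 <= c)%R by rewrite -lee_fin.
have h3 : (0 <= 3 ^+ d :> R)%R by rewrite exprn_ge0.
have ht : (t <= e / (c * 3 ^+ d + 1))%R by rewrite /t ge_min lexx orbT.
have w : (e / (c * 3 ^+ d + 1) * (c * 3 ^+ d + 1) = e)%R.
  by field; rewrite gt_eqF //; have := mulr_ge0 c0' h3; lra.
have tt : (0 <= t <= 1)%R by apply/andP; split; lra.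
have := hb tt.
have := mulr_ge0 c0' h3.
nra.
Qed.

Definition cQ (x0 : V) (m : nat) : set V :=
  [set x | forall i, (`|x ord0 i - x0 ord0 i| < m%:R)%R].

Lemma OU_cQ x0 m : OU (cQ x0 m) x0.
Proof.
move=> x hx eta heta i; rewrite mxE.
have -> : (eta i * x ord0 i + (1 - eta i) * x0 ord0 i - x0 ord0 i =
  eta i * (x ord0 i - x0 ord0 i))%R by ring.
case/andP: (heta i) => h0 h1.
rewrite normrM ger0_norm //; apply: le_lt_trans (hx i); by rewrite ler_piMl.
Qed.

Lemma OU_setI (K L : set V) x0 : OU K x0 -> OU L x0 -> OU (K `&` L) x0.
Proof. by move=> hK hL x [Kx Lx] eta heta; split; [exact: hK|exact: hL]. Qed.

Lemma cQ_cover x0 (x : V) : exists m, cQ x0 m x.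
Proof.
pose B := (\sum_j `|x ord0 j - x0 ord0 j|)%R.
exists (Num.trunc B).+1 => j.
have hB : (`|x ord0 j - x0 ord0 j| <= B)%R.
  rewrite /B (bigD1 j) //= lerDl; apply: sumr_ge0 => *; exact: normr_ge0.
have := truncnS_gt B => hm; apply: le_lt_trans hB hm.
Qed.

Lemma cl_bounded (L : set V) x0 m : L `<=` cQ x0 m -> lo (closure L) < +oo.
Proof.
move=> Lm.
apply: (@le_lt_trans _ _ (lo (box (fun i => x0 ord0 i - m.+1%:R) (fun i => x0 ord0 i + m.+1%:R))%R)).
  apply: lo_mono => p clp.
  have [z [Lz hz]] := clp _ (near_all p (r := fun=> 1%R) (fun=> ltr01)).
  move=> i; have := Lm z Lz i; have := hz i.
  rewrite !ltr_norml => /andP[h1 h2] /andP[h3 h4].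
  rewrite -natr1 in h3 h4 *; apply/andP; split; lra.
apply: le_lt_trans (lo_box_le _ _) _; exact: ltey.
Qed.

Lemma bd_null (K : set V) x0 : OU K x0 -> lo (K `\` interior K) = 0.
Proof.
move=> OUK.
apply/eqP; rewrite eq_le lo_ge0 andbT.
rewrite -(null_union (A := fun m => closure (K `&` cQ x0 m) `\` interior (K `&` cQ x0 m))).
  apply: lo_mono => x [Kx nix]; have [m xm] := cQ_cover x0 x; exists m => //; split.
    by apply: subset_closure; split.
  by move=> h; apply: nix; apply: (interiorS (@subIsetl _ K (cQ x0 m))).
move=> m; set L := K `&` cQ x0 m.
have OUL : OU L x0 by apply: OU_setI => //; exact: OU_cQ.
have hc := open_cara (@open_interior _ L) (closure L).
have e1 : closure L `&` interior L = interior L.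
  by apply/setIidr => x /interior_subset /subset_closure.
rewrite e1 setDE in hc *.
have fin : lo (interior L) \is a fin_num.
  rewrite ge0_fin_numE ?lo_ge0 //.
  apply: le_lt_trans (cl_bounded (@subIsetr _ K (cQ x0 m))).
  apply: lo_mono => x /interior_subset; exact: subset_closure.
apply/eqP; rewrite eq_le lo_ge0 andbT.
rewrite -(leeD2lE _ _ fin) adde0 -hc; exact: cl_le_int OUL.
Qed.

Lemma main_pos (K : set V) x0 : OU K x0 ->
  [/\ lebesgue_measurable K,
      OU (closure K) x0,
      OU (closure (interior K)) x0,
      lebesgue_outer (interior K) = lebesgue_outer K &
      lebesgue_outer K = lebesgue_outer (closure K)].
Proof.
move=> OUK.
have h1 : lo (interior K) <= lo K by apply: lo_mono; exact: interior_subset.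
have h2 : lo K <= lo (closure K) by apply: lo_mono; exact: subset_closure.
have h3 := cl_le_int OUK.
split.
- have -> : K = interior K `|` (K `\` interior K).
    apply/seteqP; split => x; last by case => [/interior_subset|[]].
    by move=> Kx; have [h|h] := pselect (interior K x); [left|right].
  apply: caratheodory_measurable_setU.
    exact/open_cara/open_interior.
  exact: null_cara (bd_null OUK).
- exact: OU_closure.
- exact: OU_closure_interior.
- apply/le_anti; rewrite h1 /=; exact: le_trans h2 h3.
- apply/le_anti; rewrite h2 /=; exact: le_trans h3 h1.
Qed.

End Main.

Lemma sum1_oo (R : realType) : (\sum_(k <oo) (1%:E : \bar R) = +oo)%E.
Proof.
have ge0 : (0 <= \sum_(k <oo) (1%:E : \bar R))%E.
  by apply: nneseries_ge0 => k _ _; rewrite lee_fin ler01.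
case E : (\sum_(k <oo) (1%:E : \bar R))%E => [r| |] //; last by rewrite E in ge0.
have := @nneseries_lim_ge R (fun=> 1%:E) xpredT 0 (Num.trunc r).+1.
rewrite E => /(_ (fun _ _ _ => lee01)).
rewrite sumEFin lee_fin big_const_nat iter_addr_0 subn0.
move=> h2; have h1 := truncnS_gt r; exfalso; move: h1 h2; lra.
Qed.

Lemma lo_d0 (R : realType) (A : set 'rV[R]_0) : lebesgue_outer A = +oo%E.
Proof.
apply/ereal_inf_pinfty => _ [a [b [_ ->]]].
rewrite /= -(sum1_oo R); apply: eq_eseriesr => k _; by rewrite /box_vol big_ord0.
Qed.

Unset Implicit Arguments.

Theorem mainTheorem11 (R : realType) (d : nat) (K : set 'rV[R]_d) (x0 : 'rV[R]_d) :
  OU K x0 ->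
  [/\ lebesgue_measurable K,
      OU (closure K) x0,
      OU (closure (interior K)) x0,
      lebesgue_outer (interior K) = lebesgue_outer K &
      lebesgue_outer K = lebesgue_outer (closure K)].
Proof.
case: d K x0 => [|n] K x0 OUK; last exact: main_pos.
split.
- by move=> X; rewrite !lo_d0.
- exact: OU_closure.
- exact: OU_closure_interior.
- by rewrite !lo_d0.
- by rewrite !lo_d0.
Qed.
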